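(* Let $K$ be the $2$-uniform tiling of the plane whose vertex types are $[3^2,6^2]$ and $[3^1,6^1,3^1,6^1]$. If $X$ is a map on the torus that is a quotient $X=K/\Gamma$ of $K$, then the vertices of $X$ form exactly $2$ orbits under ${\rm Aut}(X)$.
   Context: A map is a polyhedral map: a cellular embedding of a connected graph in a closed surface such that the intersection of any two distinct faces is empty, a single vertex, or a single edge. For a vertex $u$, the faces containing $u$ form a cyclic sequence (the face-cycle at $u$); if this cyclic sequence consists of consecutive blocks of $n_1$ $p_1$-gons, then $n_2$ $p_2$-gons, ..., then $n_k$ $p_k$-gons, with cyclically consecutive $p_i$ distinct, then $u$ is said to have type $[p_1^{n_1},\dots,p_k^{n_k}]$ (defined up to cyclic shift and reversal). A $2$-uniform tiling is an edge-to-edge tiling of the Euclidean plane $\mathbb{R}^2$ by regular polygons whose symmetry group has exactly two orbits on the set of vertices; viewed as a map on the plane, its vertices have (at most) two types, listed as $[W;Z]$. (Up to isomorphism there are exactly $20$ such tilings; there is exactly one with the vertex types named in the claim.) For a map $K$ on the plane, a quotient of $K$ on the torus is a map $X$ on the torus together with a polyhedral covering map $\eta:K\to X$ with $X=K/\Gamma$, where $\Gamma\le {\rm Aut}(K)$ is a subgroup acting without fixed vertices, edges or faces and $K/\Gamma$ is homeomorphic to the torus. ${\rm Aut}(X)$ denotes the automorphism group of the map $X$, acting on its vertex set $V(X)$. *)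

(* Defs.v *)
From Stdlib Require Import ZArith List.
Import ListNotations.
Open Scope Z_scope.

(** * Generic maps given by their vertex type and their face cycles.
    [face M s] holds when the list [s] is a face boundary cycle of [M]
    (listed from some starting vertex, in some direction). *)
Record Map := { vert : Type; face : list vert -> Prop }.

Definition cyc_eq {T} (s t : list T) : Prop := exists a b, s = a ++ b /\ t = b ++ a.
Definition cyc_eqr {T} (s t : list T) : Prop := cyc_eq s t \/ cyc_eq s (rev t).

Definition bij {A B} (f : A -> B) : Prop :=
  exists g : B -> A, (forall x, g (f x) = x) /\ (forall y, f (g y) = y).

Definition consec {T} (s : list T) (x y : T) : Prop := exists t, cyc_eq s (x :: y :: t).
Definition edge_of {T} (s : list T) (x y : T) : Prop := consec s x y \/ consec s y x.
Definition edge (M : Map) (x y : vert M) : Prop := exists s, face M s /\ edge_of s x y.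

Definition is_aut (M : Map) (f : vert M -> vert M) : Prop :=
  bij f /\ forall s, face M (map f s) <-> face M s.

Definition same_orbit (M : Map) (u v : vert M) : Prop := exists f, is_aut M f /\ f u = v.

Definition two_vertex_orbits (M : Map) : Prop :=
  exists u v, ~ same_orbit M u v /\ forall w, same_orbit M u w \/ same_orbit M v w.

Definition polyhedral (M : Map) : Prop :=
  (forall s, face M s -> NoDup s /\ (3 <= length s)%nat) /\
  forall s s', face M s -> face M s' -> ~ (forall x, In x s <-> In x s') ->
    (forall x, ~ (In x s /\ In x s')) \/
    (exists x, forall y, In y s /\ In y s' <-> y = x) \/
    (exists x y, edge_of s x y /\ edge_of s' x y /\
                 forall z, In z s /\ In z s' <-> z = x \/ z = y).

(** finitely many vertices (compactness of the surface) *)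
Definition finite_map (M : Map) : Prop :=
  exists (n : nat) (e : nat -> vert M), forall v, exists k, (k < n)%nat /\ e k = v.

(** orientable: one can choose one of the two orientations of each face so that
    every directed edge is traversed by at most one oriented face *)
Definition orientable (M : Map) : Prop :=
  exists O : list (vert M) -> Prop,
    (forall s, O s -> face M s) /\
    (forall s t, O s -> cyc_eq s t -> O t) /\
    (forall s, face M s -> O s \/ O (rev s)) /\
    (forall s, O s -> ~ O (rev s)) /\
    (forall x y t t', O (x :: y :: t) -> O (x :: y :: t') -> t = t').

Definition torus_map (M : Map) : Prop := polyhedral M /\ finite_map M /\ orientable M.

(** Lattice a = (sqrt3,0), b = (0,2), hexagons of side 1 centred at i a + j b.
    Per cell: A = (sqrt3/2,-1/2), B = (sqrt3/2,1/2) (type 3^2.6^2),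
              C = (0,1) (type 3.6.3.6). *)
Inductive vkind := kA | kB | kC.
Definition KV : Type := (Z * Z * vkind)%type.
Definition vA (i j : Z) : KV := (i, j, kA).
Definition vB (i j : Z) : KV := (i, j, kB).
Definition vC (i j : Z) : KV := (i, j, kC).

Inductive fkind := fH | fT1 | fT2.
Definition fcycle (i j : Z) (k : fkind) : list KV :=
  match k with
  | fH  => [vC i j; vB i j; vA i j; vC i (j - 1); vA (i - 1) j; vB (i - 1) j]
  | fT1 => [vB i j; vC (i + 1) j; vA i (j + 1)]
  | fT2 => [vB i j; vA i (j + 1); vC i j]
  end.

Definition K : Map :=
  {| vert := KV; face := fun s => exists i j k, cyc_eqr s (fcycle i j k) |}.

Definition aut_subgroup (G : (KV -> KV) -> Prop) : Prop :=
  (forall g, G g -> is_aut K g) /\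
  G (fun x => x) /\
  (forall g h, G g -> G h -> G (fun x => g (h x))) /\
  (forall g, G g -> exists h, G h /\ forall x, h (g x) = x /\ g (h x) = x).

Definition acts_freely (G : (KV -> KV) -> Prop) : Prop :=
  forall g, G g -> (exists x, g x <> x) ->
    (forall v, g v <> v) /\
    (forall u v, edge K u v -> ~ (g u = v /\ g v = u)) /\
    (forall s, face K s -> ~ (forall x, In x s -> In (g x) s)).

Definition orbitG (G : (KV -> KV) -> Prop) (v : KV) : KV -> Prop :=
  fun w => exists g, G g /\ g v = w.

Definition QV (G : (KV -> KV) -> Prop) : Type := {P : KV -> Prop | exists v, P = orbitG G v}.

Definition proj (G : (KV -> KV) -> Prop) (v : KV) : QV G :=
  exist _ (orbitG G v) (ex_intro _ v eq_refl).

Definition quotient (G : (KV -> KV) -> Prop) : Map :=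
  {| vert := QV G; face := fun s => exists t, face K t /\ s = map (proj G) t |}.

(* Main.v *)
Require Import Defs.
From Stdlib Require Import ZArith List Lia Permutation ProofIrrelevance FunctionalExtensionality PropExtensionality Classical IndefiniteDescription.
Import ListNotations.
Open Scope Z_scope.

Lemma cyc_eq_refl {T} (s : list T) : cyc_eq s s.
Proof. exists [], s. split; [reflexivity| now rewrite app_nil_r]. Qed.

Lemma cyc_eq_sym {T} (s t : list T) : cyc_eq s t -> cyc_eq t s.
Proof. intros [a [b [-> ->]]]. exists b, a. auto. Qed.

Lemma cyc_eq_trans {T} (s t u : list T) : cyc_eq s t -> cyc_eq t u -> cyc_eq s u.
Proof.
  intros [a [b [Hs Ht]]] [c [d [Ht' Hu]]]. subst s u.
  rewrite Ht' in Ht. symmetry in Ht. apply app_eq_app in Ht as [m [[H1 H2]|[H1 H2]]]; subst.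
  - exists (a ++ c), m. rewrite !app_assoc. auto.
  - exists m, (d ++ b). rewrite !app_assoc. auto.
Qed.

Lemma cyc_eq_rev {T} (s t : list T) : cyc_eq s t -> cyc_eq (rev s) (rev t).
Proof. intros [a [b [-> ->]]]. exists (rev b), (rev a). rewrite !rev_app_distr. auto. Qed.

Lemma cyc_eq_map {T U} (f : T -> U) s t : cyc_eq s t -> cyc_eq (map f s) (map f t).
Proof. intros [a [b [-> ->]]]. exists (map f a), (map f b). rewrite !map_app. auto. Qed.

Lemma cyc_eq_perm {T} (s t : list T) : cyc_eq s t -> Permutation s t.
Proof. intros [a [b [-> ->]]]. apply Permutation_app_comm. Qed.

Lemma cyc_eqr_perm {T} (s t : list T) : cyc_eqr s t -> Permutation s t.
Proof.
  intros [H|H]; apply cyc_eq_perm in H; auto.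
  eapply perm_trans; [exact H|]. apply Permutation_sym, Permutation_rev.
Qed.

Lemma cyc_eqr_refl {T} (s : list T) : cyc_eqr s s.
Proof. left; apply cyc_eq_refl. Qed.

Lemma cyc_eqr_sym {T} (s t : list T) : cyc_eqr s t -> cyc_eqr t s.
Proof.
  intros [H|H]; [left; now apply cyc_eq_sym|right].
  apply cyc_eq_rev in H. rewrite rev_involutive in H. now apply cyc_eq_sym.
Qed.

Lemma cyc_eqr_trans {T} (s t u : list T) : cyc_eqr s t -> cyc_eqr t u -> cyc_eqr s u.
Proof.
  intros [H1|H1] [H2|H2].
  - left; eapply cyc_eq_trans; eauto.
  - right; eapply cyc_eq_trans; eauto.
  - right; eapply cyc_eq_trans; eauto. now apply cyc_eq_rev.
  - left; eapply cyc_eq_trans; eauto. apply cyc_eq_rev in H2.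
    now rewrite rev_involutive in H2.
Qed.

Lemma cyc_eqr_map {T U} (f : T -> U) s t : cyc_eqr s t -> cyc_eqr (map f s) (map f t).
Proof.
  intros [H|H]; [left|right]; apply (cyc_eq_map f) in H; auto.
  now rewrite map_rev in H.
Qed.

Lemma cyc_eqr_rev {T} (s t : list T) : cyc_eqr s t -> cyc_eqr s (rev t).
Proof. intros [H|H]; [right|left]; rewrite ?rev_involutive; auto. Qed.

Lemma consec_cyc {T} (s t : list T) x y : consec s x y -> cyc_eq s t -> consec t x y.
Proof.
  intros [u Hu] H. exists u. eapply cyc_eq_trans; [apply cyc_eq_sym; exact H| exact Hu].
Qed.

Lemma consec_rev {T} (t : list T) x y : consec (rev t) x y -> consec t y x.
Proof.
  intros [r Hr]. apply cyc_eq_rev in Hr. rewrite rev_involutive in Hr.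
  exists (rev r). eapply cyc_eq_trans; [exact Hr|].
  simpl. rewrite <- app_assoc. simpl. exists (rev r), [y; x]. auto.
Qed.

Lemma edge_of_cycr {T} (s t : list T) x y : edge_of s x y -> cyc_eqr s t -> edge_of t x y.
Proof.
  intros He [H|H].
  - destruct He as [He|He]; [left|right]; eapply consec_cyc; eauto.
  - destruct He as [He|He]; [right|left]; apply consec_rev; eapply consec_cyc; eauto.
Qed.

Lemma consec_map {T U} (f : T -> U) s x y : consec s x y -> consec (map f s) (f x) (f y).
Proof. intros [u Hu]. exists (map f u). apply (cyc_eq_map f) in Hu. exact Hu. Qed.

Lemma edge_of_map {T U} (f : T -> U) s x y : edge_of s x y -> edge_of (map f s) (f x) (f y).
Proof. intros [H|H]; [left|right]; now apply consec_map. Qed.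

Lemma consec_In {T} (s : list T) x y : consec s x y -> In x s /\ In y s.
Proof.
  intros [u Hu]. apply cyc_eq_perm in Hu. split; eapply Permutation_in;
  try (apply Permutation_sym; exact Hu); simpl; auto.
Qed.

Lemma edge_of_In {T} (s : list T) x y : edge_of s x y -> In x s /\ In y s.
Proof. intros [H|H]; apply consec_In in H; tauto. Qed.

Lemma consec_neq {T} (s : list T) x y : NoDup s -> consec s x y -> x <> y.
Proof.
  intros Hn [u Hu] ->. apply cyc_eq_perm in Hu. eapply Permutation_NoDup in Hn; eauto.
  inversion Hn; subst. simpl in *; tauto.
Qed.

Lemma edge_of_neq {T} (s : list T) x y : NoDup s -> edge_of s x y -> x <> y.
Proof. intros Hn [H|H]; apply consec_neq in H; auto. Qed.

Lemma nodup_rot_head {T} (x : T) u w : NoDup (x :: u) -> cyc_eq (x :: u) (x :: w) -> u = w.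
Proof.
  intros Hn [a [b [H1 H2]]]. destruct a as [|z a].
  - simpl in H1. rewrite app_nil_r in H2. subst b. congruence.
  - simpl in H1. injection H1 as -> ->. destruct b as [|z2 b].
    + simpl in H2. injection H2 as ->. now rewrite app_nil_r.
    + simpl in H2. injection H2 as -> ->. inversion Hn; subst.
      exfalso. apply H1. apply in_or_app. simpl; auto.
Qed.

Lemma map_id_in {T} (k : T -> T) r : map k r = r -> forall v, In v r -> k v = v.
Proof.
  induction r; simpl; intros H v Hv; [contradiction|]. injection H as H1 H2.
  destruct Hv as [<-|Hv]; auto.
Qed.

Lemma fix_lemma {T} (k : T -> T) l x y :
  NoDup l -> (3 <= length l)%nat -> consec l x y -> k x = x -> k y = y ->
  cyc_eqr (map k l) l -> forall v, In v l -> k v = v.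
Proof.
  intros Hn Hl [r Hr] Hx Hy Hc.
  assert (Hp : Permutation l (x :: y :: r)) by now apply cyc_eq_perm.
  assert (Hn0 : NoDup (x :: y :: r)) by (eapply Permutation_NoDup; eauto).
  assert (Hlen : (1 <= length r)%nat) by (apply Permutation_length in Hp; simpl in Hp; lia).
  assert (Hc0 : cyc_eqr (x :: y :: map k r) (x :: y :: r)).
  { eapply cyc_eqr_trans; [|eapply cyc_eqr_trans; [exact Hc| left; exact Hr]].
    left. apply cyc_eq_sym. apply (cyc_eq_map k) in Hr. simpl in Hr. rewrite Hx, Hy in Hr. exact Hr. }
  assert (Hr' : map k r = r).
  { destruct Hc0 as [Hc0|Hc0].
    - apply cyc_eq_sym in Hc0. apply nodup_rot_head in Hc0; auto. congruence.
    - exfalso. simpl in Hc0. rewrite <- app_assoc in Hc0. simpl in Hc0.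
      assert (H2 : cyc_eq (x :: (rev r ++ [y])) (x :: y :: map k r)).
      { eapply cyc_eq_trans; [|apply cyc_eq_sym; exact Hc0].
        exists [x], (rev r ++ [y]). simpl. rewrite <- app_assoc. auto. }
      assert (Hn2 : NoDup (x :: (rev r ++ [y]))).
      { eapply Permutation_NoDup; [|exact Hn0]. apply perm_skip.
        eapply perm_trans; [apply (Permutation_app_comm [y] r)|]. apply Permutation_app_tail, Permutation_rev. }
      apply nodup_rot_head in H2; auto.
      destruct (rev r) as [|z w] eqn:E.
      + apply (f_equal (@length T)) in E. rewrite length_rev in E. simpl in E. lia.
      + simpl in H2. injection H2 as -> _. apply NoDup_cons_iff in Hn0 as [_ Hn0].
        apply NoDup_cons_iff in Hn0 as [Hn0 _].
        apply Hn0. apply in_rev. rewrite E. simpl; auto. }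
  intros v Hv. apply (Permutation_in _ Hp) in Hv. simpl in Hv.
  destruct Hv as [<-|[<-|Hv]]; auto. eapply map_id_in; eauto.
Qed.
Definition Tr (p q : Z) (v : KV) : KV := match v with (i,j,k) => (i+p, j+q, k) end.
Definition Rx (v : KV) : KV := match v with
  | (i,j,kC) => (-i, j, kC) | (i,j,kA) => (-i-1, j, kA) | (i,j,kB) => (-i-1, j, kB) end.
Definition Ry (v : KV) : KV := match v with
  | (i,j,kC) => (i, -j, kC) | (i,j,kA) => (i, 1-j, kB) | (i,j,kB) => (i, 1-j, kA) end.
Definition sym (a b : bool) (p q : Z) (v : KV) : KV :=
  Tr p q ((if a then Rx else id) ((if b then Ry else id) v)).

Definition fc (F : Z * Z * fkind) : list KV := let '(i,j,k) := F in fcycle i j k.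
Definition faces_at (v : KV) : list (Z*Z*fkind) := match v with
| (p,q,kC) => [(p,q,fH); (p,q+1,fH); (p-1,q,fT1); (p,q,fT2)]
| (p,q,kA) => [(p,q,fH); (p+1,q,fH); (p,q-1,fT1); (p,q-1,fT2)]
| (p,q,kB) => [(p,q,fH); (p+1,q,fH); (p,q,fT1); (p,q,fT2)]
end.
Ltac csimpl := cbn [map skipn firstn app rev fcycle vA vB vC Ry Rx Tr fc id sym faces_at In length] in *; unfold vA, vB, vC in *.
Ltac tup := repeat match goal with
  | |- (_, _) = (_, _) => f_equal
  | |- cons _ _ = cons _ _ => f_equal
  | |- proj _ _ = proj _ _ => f_equal end.

Lemma cyc_eq_rot_eq {T} (s t : list T) n : t = skipn n s ++ firstn n s -> cyc_eq s t.
Proof. intros ->. exists (firstn n s), (skipn n s). rewrite firstn_skipn. auto. Qed.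

Ltac rot_n n := apply (cyc_eq_rot_eq _ _ n); csimpl; tup; try reflexivity; lia.
Ltac rot_solve := first [rot_n 0%nat | rot_n 1%nat | rot_n 2%nat | rot_n 3%nat | rot_n 4%nat | rot_n 5%nat].

Lemma aut_of (f f' : KV -> KV) :
  (forall x, f (f' x) = x) -> (forall x, f' (f x) = x) ->
  (forall i j k, exists i' j' k', cyc_eqr (map f (fcycle i j k)) (fcycle i' j' k')) ->
  (forall i j k, exists i' j' k', cyc_eqr (map f' (fcycle i j k)) (fcycle i' j' k')) ->
  is_aut K f.
Proof.
  intros H1 H2 Hf Hf'. split; [exists f'; auto|].
  intros s; simpl. split.
  - intros [i [j [k Hs]]].
    apply (cyc_eqr_map f') in Hs. rewrite map_map in Hs.
    rewrite (map_ext _ (fun x => x)), map_id in Hs by auto.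
    destruct (Hf' i j k) as [i' [j' [k' H]]]. exists i', j', k'. eapply cyc_eqr_trans; eauto.
  - intros [i [j [k Hs]]].
    apply (cyc_eqr_map f) in Hs.
    destruct (Hf i j k) as [i' [j' [k' H]]]. exists i', j', k'. eapply cyc_eqr_trans; eauto.
Qed.

Lemma Tr_face p q i j k : cyc_eqr (map (Tr p q) (fcycle i j k)) (fcycle (i+p) (j+q) k).
Proof. left. destruct k; rot_solve. Qed.

Lemma Rx_face i j k : exists i' j' k', cyc_eqr (map Rx (fcycle i j k)) (fcycle i' j' k').
Proof.
  destruct k; [exists (-i), j, fH | exists (-i-1), j, fT2 | exists (-i-1), j, fT1];
  right; rot_solve.
Qed.

Lemma Ry_face i j k : exists i' j' k', cyc_eqr (map Ry (fcycle i j k)) (fcycle i' j' k').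
Proof.
  destruct k; [exists i, (1-j), fH | exists i, (-j), fT1 | exists i, (-j), fT2];
  right; rot_solve.
Qed.

Lemma Tr_aut p q : is_aut K (Tr p q).
Proof.
  apply (aut_of _ (Tr (-p) (-q))).
  - intros [[i j] k]; csimpl; tup; try reflexivity; lia.
  - intros [[i j] k]; csimpl; tup; try reflexivity; lia.
  - intros i j k; do 3 eexists; apply Tr_face.
  - intros i j k; do 3 eexists; apply Tr_face.
Qed.

Lemma Rx_inv x : Rx (Rx x) = x.
Proof. destruct x as [[i j] []]; csimpl; tup; try reflexivity; lia. Qed.
Lemma Ry_inv x : Ry (Ry x) = x.
Proof. destruct x as [[i j] []]; csimpl; tup; try reflexivity; lia. Qed.

Lemma Rx_aut : is_aut K Rx.
Proof. apply (aut_of _ Rx); auto using Rx_inv, Rx_face. Qed.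
Lemma Ry_aut : is_aut K Ry.
Proof. apply (aut_of _ Ry); auto using Ry_inv, Ry_face. Qed.

Lemma id_aut (M : Map) : is_aut M (fun x => x).
Proof. split; [exists (fun x => x); auto|]. intros s; rewrite map_id; tauto. Qed.

Lemma comp_aut (M : Map) (f g : vert M -> vert M) :
  is_aut M f -> is_aut M g -> is_aut M (fun x => f (g x)).
Proof.
  intros [[f' [Hf1 Hf2]] Hf] [[g' [Hg1 Hg2]] Hg]. split.
  - exists (fun x => g' (f' x)). split; intros; congruence.
  - intros s. rewrite <- map_map. rewrite Hf, Hg. tauto.
Qed.

Lemma inv_aut (M : Map) (f f' : vert M -> vert M) :
  is_aut M f -> (forall x, f (f' x) = x) -> (forall x, f' (f x) = x) -> is_aut M f'.
Proof.
  intros [_ Hf] H1 H2. split; [exists f; auto|].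
  intros s. rewrite <- (Hf (map f' s)). rewrite map_map.
  rewrite (map_ext _ (fun x => x)), map_id by auto. tauto.
Qed.

Lemma aut_ext (M : Map) (f g : vert M -> vert M) :
  is_aut M f -> (forall x, f x = g x) -> is_aut M g.
Proof.
  intros Hf H. replace g with f; auto. apply functional_extensionality; auto.
Qed.

Lemma sym_aut a b p q : is_aut K (sym a b p q).
Proof.
  unfold sym. apply (comp_aut K (Tr p q)); [apply Tr_aut|].
  apply (comp_aut K (if a then Rx else id) (if b then Ry else id));
  [destruct a; [apply Rx_aut|apply id_aut] | destruct b; [apply Ry_aut|apply id_aut]].
Qed.

Ltac neq_solve := let H := fresh in intro H; csimpl;
  repeat destruct H as [H|H]; try contradiction;
  try discriminate; try (injection H; intros; lia).

Lemma fcycle_nodup i j k : NoDup (fcycle i j k).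
Proof. destruct k; csimpl; repeat constructor; neq_solve. Qed.

Lemma fcycle_len i j k : (3 <= length (fcycle i j k))%nat.
Proof. destruct k; simpl; lia. Qed.


Ltac pick_in := csimpl; repeat (first [left; solve [tup; try reflexivity; lia] | right]).

Lemma in_fcycle_faces_at i j k v : In v (fcycle i j k) -> In (i,j,k) (faces_at v).
Proof.
  destruct v as [[p q] kv]. intros H.
  destruct k; csimpl; repeat destruct H as [H|H]; try contradiction;
  injection H; intros; subst; pick_in.
Qed.

Lemma face_K_In s v : face K s -> In v s ->
  exists F, In F (faces_at v) /\ cyc_eqr s (fc F).
Proof.
  simpl. intros [i [j [k Hs]]] Hv. exists (i,j,k). split; [|exact Hs].
  apply in_fcycle_faces_at. eapply Permutation_in; [apply cyc_eqr_perm; exact Hs|exact Hv].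
Qed.

Lemma face_K_nodup s : face K s -> NoDup s.
Proof.
  simpl. intros [i [j [k Hs]]]. eapply Permutation_NoDup; [apply Permutation_sym, cyc_eqr_perm; exact Hs|].
  apply fcycle_nodup.
Qed.

Lemma face_K_len s : face K s -> exists i j k, length s = length (fcycle i j k).
Proof.
  simpl. intros [i [j [k Hs]]]. exists i, j, k. now apply Permutation_length, cyc_eqr_perm.
Qed.

Definition Qp (M : Map) (v : vert M) : Prop :=
  exists s s' y z, face M s /\ face M s' /\ length s = 3%nat /\ length s' = 3%nat /\
    edge_of s v y /\ edge_of s' v y /\ In z s /\ ~ In z s'.

Lemma Qp_aut (M : Map) f v : is_aut M f -> Qp M v -> Qp M (f v).
Proof.
  intros [[f' [Hf1 Hf2]] Hf] [s [s' [y [z [H1 [H2 [H3 [H4 [H5 [H6 [H7 H8]]]]]]]]]]].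
  exists (map f s), (map f s'), (f y), (f z).
  repeat split; try (apply Hf; assumption); rewrite ?length_map; auto using edge_of_map.
  - now apply in_map.
  - intros Hin. apply in_map_iff in Hin as [w [Hw Hw']].
    apply (f_equal f') in Hw. rewrite !Hf1 in Hw. subst; auto.
Qed.

Lemma in_cycr {T} (s l : list T) x : cyc_eqr s l -> In x s -> In x l.
Proof. intros; eapply Permutation_in; [apply cyc_eqr_perm|]; eauto. Qed.
Lemma in_cycr' {T} (s l : list T) x : cyc_eqr s l -> In x l -> In x s.
Proof. intros; eapply Permutation_in; [apply Permutation_sym, cyc_eqr_perm|]; eauto. Qed.
Lemma len_cycr {T} (s l : list T) : cyc_eqr s l -> length s = length l.
Proof. intros; apply Permutation_length, cyc_eqr_perm; auto. Qed.

Lemma noQ (M : Map) v l1 l2 :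
  (forall s, face M s -> NoDup s) ->
  (forall s, face M s -> length s = 3%nat -> In v s -> cyc_eqr s l1 \/ cyc_eqr s l2) ->
  (forall y, In y l1 -> In y l2 -> y = v) -> ~ Qp M v.
Proof.
  intros Hnd Hf Hy [s [s' [y [z [H1 [H2 [H3 [H4 [H5 [H6 [H7 H8]]]]]]]]]]].
  assert (Hyv : y <> v) by (intro; subst; eapply edge_of_neq; eauto).
  pose proof (edge_of_In _ _ _ H5) as [Hv Hys]. pose proof (edge_of_In _ _ _ H6) as [Hv' Hys'].
  destruct (Hf s H1 H3 Hv) as [A|A]; destruct (Hf s' H2 H4 Hv') as [B|B].
  - apply H8. exact (in_cycr' _ _ z B (in_cycr _ _ z A H7)).
  - exact (Hyv (Hy y (in_cycr _ _ y A Hys) (in_cycr _ _ y B Hys'))).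
  - exact (Hyv (Hy y (in_cycr _ _ y B Hys') (in_cycr _ _ y A Hys))).
  - apply H8. exact (in_cycr' _ _ z B (in_cycr _ _ z A H7)).
Qed.

Lemma fc_face F : face K (fc F).
Proof. destruct F as [[i j] k]. exists i, j, k. apply cyc_eqr_refl. Qed.

Lemma fc_nodup F : NoDup (fc F).
Proof. destruct F as [[i j] k]. apply fcycle_nodup. Qed.

Lemma fc_len F : (3 <= length (fc F))%nat.
Proof. destruct F as [[i j] k]. apply fcycle_len. Qed.

Ltac dall := repeat match goal with H : _ \/ _ |- _ => destruct H | H : False |- _ => contradiction end.
Ltac eqs := repeat match goal with E : (_,_,_) = (_,_,_) |- _ => first [discriminate E | injection E; intros; clear E] end.
Ltac in_solve H := csimpl; dall; try subst; try reflexivity; eqs; try lia; try (tup; try reflexivity; lia).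

Lemma noQ_K : ~ Qp K (0,0,kC).
Proof.
  apply (noQ K _ (fc (-1,0,fT1)) (fc (0,0,fT2))).
  - apply face_K_nodup.
  - intros s Hs Hl Hv. destruct (face_K_In s _ Hs Hv) as [F [HF Hc]].
    apply len_cycr in Hc as Hl'. csimpl. repeat destruct HF as [<-|HF]; try contradiction.
    + csimpl; rewrite Hl in Hl'; discriminate.
    + csimpl; rewrite Hl in Hl'; discriminate.
    + left; exact Hc.
    + right; exact Hc.
  - intros y H1 H2. in_solve H1.
Qed.

Lemma consec_hd {T} (x y : T) t : consec (x :: y :: t) x y.
Proof. exists t. apply cyc_eq_refl. Qed.

Lemma Qp_KA i j : Qp K (i,j,kA).
Proof.
  exists (fc (i,j-1,fT1)), (fc (i,j-1,fT2)), (i,j-1,kB), (i+1,j-1,kC).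
  repeat split; try apply fc_face; try reflexivity.
  - left. apply (consec_cyc _ _ _ _ (consec_hd _ _ [(i+1,j-1,kC)])). rot_solve.
  - right. apply (consec_cyc _ _ _ _ (consec_hd _ _ [(i,j-1,kC)])). rot_solve.
  - csimpl; auto.
  - intro H; in_solve H.
Qed.

Lemma Qp_KB i j : Qp K (i,j,kB).
Proof.
  exists (fc (i,j,fT1)), (fc (i,j,fT2)), (i,j+1,kA), (i+1,j,kC).
  repeat split; try apply fc_face; try reflexivity.
  - right. apply (consec_cyc _ _ _ _ (consec_hd _ _ [(i+1,j,kC)])). rot_solve.
  - left. apply (consec_cyc _ _ _ _ (consec_hd _ _ [(i,j,kC)])). rot_solve.
  - csimpl; auto.
  - intro H; in_solve H.
Qed.

Lemma kind_C00 g : is_aut K g -> exists p q, g (0,0,kC) = (p,q,kC).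
Proof.
  intros Hg. destruct Hg as [[g' [H1 H2]] Hf] eqn:E.
  assert (Hg' : is_aut K g') by (eapply inv_aut; eauto; rewrite E; auto).
  destruct (g (0,0,kC)) as [[p q] k] eqn:Eg. destruct k; eauto; exfalso; apply noQ_K.
  - rewrite <- (H1 (0,0,kC)), Eg. apply Qp_aut; auto. apply Qp_KA.
  - rewrite <- (H1 (0,0,kC)), Eg. apply Qp_aut; auto. apply Qp_KB.
Qed.

Definition rots {T} (l : list T) := map (fun n => skipn n l ++ firstn n l) (seq 0 (S (length l))).

Lemma cyc_eq_rots {T} (l t : list T) : cyc_eq l t -> In t (rots l).
Proof.
  intros [a [b [-> ->]]]. unfold rots. apply in_map_iff. exists (length a). split.
  - rewrite skipn_app, firstn_app, skipn_all, firstn_all, Nat.sub_diag. simpl. now rewrite app_nil_r.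
  - apply in_seq. rewrite length_app. lia.
Qed.

Ltac leqs := repeat match goal with E : _ :: _ = _ :: _ |- _ => injection E; intros; clear E end.

Lemma nbr_C00 y : edge K (0,0,kC) y ->
  y = (0,0,kB) \/ y = (-1,0,kB) \/ y = (0,1,kA) \/ y = (-1,1,kA).
Proof.
  intros [s [Hs He]]. pose proof (edge_of_In _ _ _ He) as [Hv _].
  destruct (face_K_In s _ Hs Hv) as [F [HF Hc]].
  apply (edge_of_cycr _ _ _ _ He) in Hc. clear He Hs Hv.
  csimpl. dall; subst F;
  destruct Hc as [[t Ht]|[t Ht]]; apply cyc_eq_rots in Ht; cbn in Ht; unfold vA, vB, vC in *; dall; leqs; subst; eqs; try discriminate;
  try lia; try (repeat (first [left; reflexivity | right]); reflexivity).
Qed.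

Lemma Zind (P : Z -> Prop) : P 0 -> (forall z, P z -> P (z+1)) -> (forall z, P z -> P (z-1)) ->
  forall z, P z.
Proof.
  intros H0 Hs Hp. assert (A : forall n : nat, P (Z.of_nat n) /\ P (- Z.of_nat n)).
  { induction n as [|n [IH1 IH2]]; [simpl; auto|]. rewrite Nat2Z.inj_succ. split.
    - replace (Z.succ (Z.of_nat n)) with (Z.of_nat n + 1) by lia; auto.
    - replace (- Z.succ (Z.of_nat n)) with (- Z.of_nat n - 1) by lia; auto. }
  intros z. destruct (Z_le_gt_dec 0 z).
  - replace z with (Z.of_nat (Z.to_nat z)) by lia. apply A.
  - replace z with (- Z.of_nat (Z.to_nat (-z))) by lia. apply A.
Qed.

Definition Fix (k : KV -> KV) F := forall v, In v (fc F) -> k v = v.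

Lemma fix_face k F' x y : consec (fc F') x y -> k x = x -> k y = y ->
  cyc_eqr (map k (fc F')) (fc F') -> Fix k F'.
Proof. intros. intros v Hv. eapply fix_lemma; eauto using fc_nodup, fc_len. Qed.

Lemma aut_inj (M : Map) k : is_aut M k -> forall x y, k x = k y -> x = y.
Proof.
  intros [[k' [H1 H2]] _] x y E. apply (f_equal k') in E. now rewrite !H1 in E.
Qed.

Lemma propagate k F F' x y z : is_aut K k -> Fix k F -> consec (fc F') x y ->
  In x (fc F) -> In y (fc F) -> In z (fc F') -> ~ In z (fc F) ->
  (forall G0, In G0 (faces_at x) -> In y (fc G0) -> G0 = F \/ G0 = F') -> Fix k F'.
Proof.
  intros Hk HF Hc Hx Hy Hz Hz' Hfa.
  assert (kx : k x = x) by auto. assert (ky : k y = y) by auto.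
  assert (Hs : face K (map k (fc F'))) by (apply (proj2 Hk); apply fc_face).
  destruct (consec_In _ _ _ Hc) as [Hx' Hy'].
  assert (Hxs : In x (map k (fc F'))) by (rewrite <- kx; now apply in_map).
  assert (Hys : In y (map k (fc F'))) by (rewrite <- ky; now apply in_map).
  destruct (face_K_In _ _ Hs Hxs) as [G0 [HG0 Hc0]].
  destruct (Hfa G0 HG0 (in_cycr _ _ _ Hc0 Hys)) as [->| ->].
  - exfalso. assert (Hkz : In (k z) (fc F)) by (apply (in_cycr _ _ _ Hc0); now apply in_map).
    pose proof (HF _ Hkz) as E. apply (aut_inj _ _ Hk) in E. rewrite E in Hkz. auto.
  - eapply fix_face; eauto.
Qed.

Lemma fix_start k F' x y : is_aut K k -> consec (fc F') x y -> k x = x -> k y = y ->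
  (forall G0, In G0 (faces_at x) -> In y (fc G0) -> length (fc G0) = length (fc F') -> G0 = F') ->
  Fix k F'.
Proof.
  intros Hk Hc kx ky Hfa.
  assert (Hs : face K (map k (fc F'))) by (apply (proj2 Hk); apply fc_face).
  destruct (consec_In _ _ _ Hc) as [Hx' Hy'].
  assert (Hxs : In x (map k (fc F'))) by (rewrite <- kx; now apply in_map).
  assert (Hys : In y (map k (fc F'))) by (rewrite <- ky; now apply in_map).
  destruct (face_K_In _ _ Hs Hxs) as [G0 [HG0 Hc0]].
  assert (HL : length (fc G0) = length (fc F')) by (pose proof (len_cycr _ _ Hc0) as L; rewrite length_map in L; symmetry; exact L).
  rewrite (Hfa G0 HG0 (in_cycr _ _ _ Hc0 Hys) HL) in Hc0.
  eapply fix_face; eauto.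
Qed.

Ltac consec_n n := unfold consec; eexists; apply (cyc_eq_rot_eq _ _ n); csimpl; tup; try reflexivity; lia.
Ltac consec_solve := first [consec_n 0%nat | consec_n 1%nat | consec_n 2%nat | consec_n 3%nat | consec_n 4%nat | consec_n 5%nat].
Ltac fa_solve := let G0 := fresh in let HG := fresh in let Hy := fresh in
  intros G0 HG Hy; csimpl; dall; subst G0; csimpl; dall; eqs; try discriminate;
  first [left; tup; try reflexivity; lia | right; tup; try reflexivity; lia | exfalso; lia].
Ltac pgoal := first [assumption | solve [consec_solve] | solve [pick_in] |
  solve [let HH := fresh in intro HH; in_solve HH] | solve [fa_solve]].

Lemma sR k i j : is_aut K k -> Fix k (i,j,fH) -> Fix k (i+1,j,fH).
Proof. intros. apply (propagate k (i,j,fH) (i+1,j,fH) (i,j,kA) (i,j,kB) (i+1,j,kC)); pgoal. Qed.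
Lemma sL k i j : is_aut K k -> Fix k (i,j,fH) -> Fix k (i-1,j,fH).
Proof. intros. apply (propagate k (i,j,fH) (i-1,j,fH) (i-1,j,kB) (i-1,j,kA) (i-1,j,kC)); pgoal. Qed.
Lemma sU1 k i j : is_aut K k -> Fix k (i,j,fH) -> Fix k (i,j,fT2).
Proof. intros. apply (propagate k (i,j,fH) (i,j,fT2) (i,j,kC) (i,j,kB) (i,j+1,kA)); pgoal. Qed.
Lemma sU2 k i j : is_aut K k -> Fix k (i,j,fT2) -> Fix k (i,j+1,fH).
Proof. intros. apply (propagate k (i,j,fT2) (i,j+1,fH) (i,j+1,kA) (i,j,kC) (i,j+1,kC)); pgoal. Qed.
Lemma sD1 k i j : is_aut K k -> Fix k (i,j,fH) -> Fix k (i,j-1,fT2).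
Proof. intros. apply (propagate k (i,j,fH) (i,j-1,fT2) (i,j,kA) (i,j-1,kC) (i,j-1,kB)); pgoal. Qed.
Lemma sD2 k i j : is_aut K k -> Fix k (i,j,fT2) -> Fix k (i,j,fH).
Proof. intros. apply (propagate k (i,j,fT2) (i,j,fH) (i,j,kC) (i,j,kB) (i,j,kA)); pgoal. Qed.

Lemma all_fixed k : is_aut K k -> Fix k (0,0,fH) -> forall v, k v = v.
Proof.
  intros Hk H0.
  assert (Hc : forall j, Fix k (0,j,fH)).
  { apply Zind; auto.
    - intros z Hz. apply sU2, sU1; auto.
    - intros z Hz. apply sD2; auto. apply sD1; auto. }
  assert (Ha : forall i j, Fix k (i,j,fH)).
  { intros i j. revert i. apply Zind; auto; intros; [apply sR|apply sL]; auto. }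
  intros [[i j] kd]. apply (Ha i j). destruct kd; pick_in.
Qed.

Lemma edge_aut k x y : is_aut K k -> edge K x y -> edge K (k x) (k y).
Proof.
  intros Hk [s [Hs He]]. exists (map k s). split; [apply (proj2 Hk); auto|].
  now apply edge_of_map.
Qed.

Lemma sym00_inv a b x : sym a b 0 0 (sym a b 0 0 x) = x.
Proof. destruct a, b, x as [[i j] []]; csimpl; tup; try reflexivity; lia. Qed.

Lemma Tr_sym a b p q x : Tr p q (sym a b 0 0 x) = sym a b p q x.
Proof. destruct a, b, x as [[i j] []]; csimpl; tup; try reflexivity; lia. Qed.

Lemma Tr_inv p q x : Tr p q (Tr (-p) (-q) x) = x.
Proof. destruct x as [[i j] []]; csimpl; tup; try reflexivity; lia. Qed.

Lemma classify g : is_aut K g -> exists a b p q, forall v, g v = sym a b p q v.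
Proof.
  intros Hg. destruct (kind_C00 g Hg) as [p [q Hpq]].
  set (h := fun v => Tr (-p) (-q) (g v)).
  assert (Hh : is_aut K h) by (apply (comp_aut K (Tr (-p) (-q)) g); auto using Tr_aut).
  assert (hC : h (0,0,kC) = (0,0,kC)) by (unfold h; rewrite Hpq; csimpl; tup; lia).
  assert (HE : edge K (0,0,kC) (h (0,0,kB))).
  { rewrite <- hC. apply edge_aut; auto. exists (fc (0,0,fH)). split; [apply fc_face|].
    left; consec_solve. }
  assert (Hab : exists a b, sym a b 0 0 (0,0,kB) = h (0,0,kB)).
  { apply nbr_C00 in HE. dall; rewrite H;
    [exists false, false|exists true, false|exists false, true|exists true, true];
    csimpl; tup; try reflexivity; lia. }
  destruct Hab as [a [b Hab]].
  set (k := fun v => sym a b 0 0 (h v)).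
  assert (Hk : is_aut K k) by (apply (comp_aut K (sym a b 0 0) h); auto using sym_aut).
  assert (HkC : k (0,0,kC) = (0,0,kC)) by (unfold k; rewrite hC; destruct a, b; csimpl; tup; lia).
  assert (HkB : k (0,0,kB) = (0,0,kB)) by (unfold k; rewrite <- Hab; apply sym00_inv).
  assert (HF : Fix k (0,0,fH)).
  { apply (fix_start k _ (0,0,kC) (0,0,kB)); auto; [consec_solve|].
    intros G0 HG Hy HL. csimpl; dall; subst G0; csimpl; dall; eqs; try discriminate;
    try (tup; lia); csimpl; discriminate. }
  pose proof (all_fixed k Hk HF) as Hid.
  exists a, b, p, q. intros v. specialize (Hid v). unfold k, h in Hid.
  apply (f_equal (sym a b 0 0)) in Hid. rewrite sym00_inv in Hid.
  apply (f_equal (Tr p q)) in Hid. rewrite Tr_inv in Hid. rewrite Hid. apply Tr_sym.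
Qed.

Lemma qv_eq (G : (KV -> KV) -> Prop) (P Q : QV G) : proj1_sig P = proj1_sig Q -> P = Q.
Proof.
  destruct P as [P HP], Q as [Q HQ]; simpl; intros ->. f_equal. apply proof_irrelevance.
Qed.

Lemma projG G g v : aut_subgroup G -> G g -> proj G (g v) = proj G v.
Proof.
  intros [_ [Hid [Hc Hinv]]] Hg. apply qv_eq; simpl.
  apply functional_extensionality; intros w. apply propositional_extensionality.
  unfold orbitG. split.
  - intros [h [Hh <-]]. exists (fun x => h (g x)). auto.
  - intros [h [Hh <-]]. destruct (Hinv g Hg) as [g' [Hg' Hgg]].
    exists (fun x => h (g' x)). split; [auto|]. now rewrite (proj1 (Hgg v)).
Qed.

Lemma proj_inv G x y : aut_subgroup G -> proj G x = proj G y -> exists g, G g /\ g x = y.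
Proof.
  intros [_ [Hid _]] E. apply (f_equal (@proj1_sig _ _)) in E. simpl in E.
  assert (H : orbitG G y y) by (exists (fun x => x); auto).
  rewrite <- E in H. exact H.
Qed.

Lemma Gsym G g : aut_subgroup G -> G g -> exists a b p q, forall v, g v = sym a b p q v.
Proof. intros [Ha _] Hg. apply classify, Ha, Hg. Qed.

Lemma qface G F : face (quotient G) (map (proj G) (fc F)).
Proof. exists (fc F). split; [apply fc_face|reflexivity]. Qed.

Lemma no_rot G g p q : aut_subgroup G -> acts_freely G -> G g ->
  (forall v, g v = sym true true p q v) -> False.
Proof.
  intros HG HF Hg Hs.
  assert (Hn : exists x, g x <> x) by (exists (0,0,kA); rewrite Hs; csimpl; discriminate).
  destruct (HF g Hg Hn) as [Hv [He Hf]].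
  destruct (Z.Even_or_Odd p) as [[k Hk]|[k Hk]]; destruct (Z.Even_or_Odd q) as [[l Hl]|[l Hl]]; subst p q.
  - apply (Hv (k,l,kC)). rewrite Hs; csimpl; tup; lia.
  - apply (Hf (fc (k,l+1,fH)) (fc_face _)). intros x Hx. rewrite Hs.
    csimpl; dall; subst; csimpl; pick_in.
  - apply (He (k,l,kB) (k,l+1,kA)).
    + exists (fc (k,l,fT2)). split; [apply fc_face|]. left; consec_solve.
    + rewrite !Hs; csimpl; split; tup; lia.
  - apply (He (k,l+1,kA) (k,l+1,kB)).
    + exists (fc (k,l+1,fH)). split; [apply fc_face|]. right; consec_solve.
    + rewrite !Hs; csimpl; split; tup; lia.
Qed.

Lemma poly3 {T} (s s' : list T) a b c : a <> b -> a <> c -> b <> c ->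
  In a s -> In a s' -> In b s -> In b s' -> In c s -> In c s' ->
  ((forall x, ~ (In x s /\ In x s')) \/ (exists x, forall y, In y s /\ In y s' <-> y = x) \/
   (exists x y, edge_of s x y /\ edge_of s' x y /\ forall z, In z s /\ In z s' <-> z = x \/ z = y)) ->
  False.
Proof.
  intros dab dac dbc a1 a2 b1 b2 c1 c2 [H|[[x H]|[x [y [_ [_ H]]]]]].
  - apply (H a); auto.
  - apply dab. rewrite (proj1 (H a) (conj a1 a2)), (proj1 (H b) (conj b1 b2)). auto.
  - destruct (proj1 (H a) (conj a1 a2)), (proj1 (H b) (conj b1 b2)), (proj1 (H c) (conj c1 c2));
    subst; auto.
Qed.

Lemma noshift G g m j : aut_subgroup G -> acts_freely G -> polyhedral (quotient G) -> G g ->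
  g (m,j,kC) = (m+1,j,kC) -> False.
Proof.
  intros HG HF [Hnd Hint] Hg Hgm.
  destruct (Gsym G g HG Hg) as [a [b [p [q Hs]]]].
  pose proof Hgm as E. rewrite Hs in E. destruct a, b; csimpl; injection E; intros E1 E2.
  - eapply no_rot; eauto.
  - assert (Hn : exists x, g x <> x) by (exists (m,j,kC); rewrite Hgm; intro E3; injection E3; lia).
    destruct (HF g Hg Hn) as [Hv _]. apply (Hv (m,j,kA)). rewrite Hs; csimpl; tup; lia.
  - assert (e1 : proj G (m+1,j,kC) = proj G (m,j,kC)) by (rewrite <- Hgm; apply projG; auto).
    assert (e2 : proj G (m+1,j,kB) = proj G (m,j+1,kA)).
    { replace (m+1,j,kB) with (g (m,j+1,kA)) by (rewrite Hs; csimpl; tup; lia). apply projG; auto. }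
    set (s := map (proj G) (fc (m,j,fT2))). set (s' := map (proj G) (fc (m+1,j,fH))).
    assert (Ns : NoDup s) by (apply Hnd, qface).
    assert (Ns' : NoDup s') by (apply Hnd, qface).
    assert (Hne : ~ (forall x, In x s <-> In x s')).
    { intros Heq. assert (L : (length s' <= length s)%nat).
      { apply NoDup_incl_length; auto. intros x Hx; apply Heq; auto. }
      unfold s, s' in L; csimpl; simpl in L; lia. }
    pose proof (Hint s s' (qface _ _) (qface _ _) Hne) as Hc.
    unfold s in Ns. csimpl. apply NoDup_cons_iff in Ns as [N1 Ns]. apply NoDup_cons_iff in Ns as [N2 _].
    apply (poly3 s s' (proj G (m,j,kB)) (proj G (m,j+1,kA)) (proj G (m,j,kC))); auto;
    unfold s, s'; csimpl.
    + intro E3; apply N1; rewrite E3; simpl; auto.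
    + intro E3; apply N1; rewrite E3; simpl; auto.
    + intro E3; apply N2; rewrite E3; simpl; auto.
    + auto.
    + do 5 right; left. f_equal. tup; lia.
    + auto.
    + right; left. auto.
    + auto.
    + left. auto.
  - assert (e : proj G (m-1,j,kA) = proj G (m,j,kA)).
    { replace (m,j,kA) with (g (m-1,j,kA)) by (rewrite Hs; csimpl; tup; lia). symmetry; apply projG; auto. }
    pose proof (Hnd _ (qface G (m,j,fH))) as [N _]. csimpl.
    apply NoDup_cons_iff in N as [_ N]. apply NoDup_cons_iff in N as [_ N].
    apply NoDup_cons_iff in N as [N _]. apply N. right; left; auto.
Qed.

Definition orient G (O : list (QV G) -> Prop) : Prop :=
    (forall s, O s -> face (quotient G) s) /\
    (forall s t, O s -> cyc_eq s t -> O t) /\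
    (forall s, face (quotient G) s -> O s \/ O (rev s)) /\
    (forall s, O s -> ~ O (rev s)) /\
    (forall x y t t', O (x :: y :: t) -> O (x :: y :: t') -> t = t').

Lemma rev2 {T} (x y : T) t : cyc_eq (rev (x :: y :: t)) (y :: x :: rev t).
Proof. exists (rev t), [y; x]. simpl. rewrite <- app_assoc. auto. Qed.

Lemma link_same G O F F' x y t t' : orient G O ->
  cyc_eq (fc F) (x :: y :: t) -> cyc_eq (fc F') (x :: y :: t') ->
  map (proj G) t <> map (proj G) t' ->
  (O (map (proj G) (fc F)) <-> ~ O (map (proj G) (fc F'))).
Proof.
  intros [O1 [O2 [O3 [O4 O5]]]] c1 c2 Hne.
  apply (cyc_eq_map (proj G)) in c1, c2. simpl in c1, c2.
  split.
  - intros H1 H2. apply Hne. exact (O5 _ _ _ _ (O2 _ _ H1 c1) (O2 _ _ H2 c2)).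
  - intros H2. destruct (O3 _ (qface G F)) as [H1|H1]; auto. exfalso.
    destruct (O3 _ (qface G F')) as [H3|H3]; [contradiction|].
    apply cyc_eq_rev in c1, c2.
    pose proof (O2 _ _ (O2 _ _ H1 c1) (rev2 _ _ _)) as K1.
    pose proof (O2 _ _ (O2 _ _ H3 c2) (rev2 _ _ _)) as K2.
    pose proof (O5 _ _ _ _ K1 K2) as E. apply (f_equal (@rev _)) in E. rewrite !rev_involutive in E.
    auto.
Qed.

Lemma link_opp G O F F' x y t t' : orient G O ->
  cyc_eq (fc F) (x :: y :: t) -> cyc_eq (fc F') (y :: x :: t') ->
  map (proj G) t <> map (proj G) (rev t') ->
  (O (map (proj G) (fc F)) <-> O (map (proj G) (fc F'))).
Proof.
  intros [O1 [O2 [O3 [O4 O5]]]] c1 c2 Hne.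
  apply (cyc_eq_map (proj G)) in c1, c2. simpl in c1, c2.
  split.
  - intros H1. destruct (O3 _ (qface G F')) as [H2|H2]; auto. exfalso.
    apply cyc_eq_rev in c2.
    pose proof (O2 _ _ (O2 _ _ H2 c2) (rev2 _ _ _)) as K2.
    apply Hne. rewrite map_rev. exact (O5 _ _ _ _ (O2 _ _ H1 c1) K2).
  - intros H2. destruct (O3 _ (qface G F)) as [H1|H1]; auto. exfalso.
    apply cyc_eq_rev in c1.
    pose proof (O2 _ _ (O2 _ _ H1 c1) (rev2 _ _ _)) as K1.
    pose proof (O5 _ _ _ _ K1 (O2 _ _ H2 c2)) as E.
    apply Hne. rewrite map_rev, <- E, rev_involutive. auto.
Qed.

Ltac len_ne := let E := fresh in intro E; apply (f_equal (@length _)) in E;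
  rewrite !length_map in E; simpl in E; discriminate.

Lemma delta_const G O : aut_subgroup G -> acts_freely G -> polyhedral (quotient G) -> orient G O ->
  forall i j, O (map (proj G) (fc (i,j,fH))) <-> O (map (proj G) (fc (0,0,fH))).
Proof.
  intros HG HF HP HO.
  set (d := fun F => O (map (proj G) (fc F))).
  assert (V1 : forall i j, d (i,j,fH) <-> ~ d (i,j,fT2)).
  { intros i j. eapply (link_same G O _ _ (i,j,kC) (i,j,kB)); auto; [rot_solve|rot_solve|len_ne]. }
  assert (V2 : forall i j, d (i,j,fT2) <-> ~ d (i,j+1,fH)).
  { intros i j. eapply (link_same G O _ _ (i,j+1,kA) (i,j,kC)); auto; [rot_solve|rot_solve|len_ne]. }
  assert (V3 : forall i j, d (i,j,fT2) <-> d (i,j,fT1)).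
  { intros i j. eapply (link_opp G O _ _ (i,j,kB) (i,j+1,kA)); auto; [rot_solve|rot_solve|].
    simpl. intro E. assert (E' : proj G (i,j,kC) = proj G (i+1,j,kC)) by congruence.
    destruct (proj_inv G _ _ HG E') as [h [Hh Eh]]. eapply noshift; eauto. }
  assert (V4 : forall i j, d (i,j,fT1) <-> ~ d (i+1,j,fH)).
  { intros i j. eapply (link_same G O _ _ (i,j,kB) (i+1,j,kC)); auto; [rot_solve|rot_solve|len_ne]. }
  assert (Vv : forall i j, d (i,j,fH) <-> d (i,j+1,fH)).
  { intros i j. pose proof (V1 i j). pose proof (V2 i j). destruct (classic (d (i,j,fT2))); tauto. }
  assert (Vh : forall i j, d (i,j,fH) <-> d (i+1,j,fH)).
  { intros i j. pose proof (V1 i j). pose proof (V3 i j). pose proof (V4 i j).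
    destruct (classic (d (i,j,fT2))); tauto. }
  assert (C0 : forall j, d (0,j,fH) <-> d (0,0,fH)).
  { apply Zind; [tauto| |].
    - intros z Hz. cbv beta in *. rewrite <- Vv; auto.
    - intros z Hz. cbv beta in *. rewrite <- Hz. pose proof (Vv 0 (z-1)) as W.
      replace (z-1+1) with z in W by lia. tauto. }
  intros i j. change (d (i,j,fH) <-> d (0,0,fH)). revert i. apply Zind; [apply C0| |].
  - intros z Hz. cbv beta in *. rewrite <- Vh; auto.
  - intros z Hz. cbv beta in *. rewrite <- Hz. pose proof (Vh (z-1) j) as W.
    replace (z-1+1) with z in W by lia. tauto.
Qed.

Lemma no_rev G g a b p q : aut_subgroup G -> acts_freely G -> torus_map (quotient G) -> G g ->
  (forall v, g v = sym a b p q v) -> a <> b -> False.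
Proof.
  intros HG HF [HP [_ [O HO]]] Hg Hs Hab.
  assert (HO' : orient G O) by exact HO.
  pose proof (delta_const G O HG HF HP HO') as D.
  destruct HO as [O1 [O2 [O3 [O4 O5]]]].
  assert (Hm : map (proj G) (map g (fc (0,0,fH))) = map (proj G) (fc (0,0,fH))).
  { rewrite map_map. apply map_ext. intros; apply projG; auto. }
  assert (HR : exists i j, cyc_eq (map g (fc (0,0,fH))) (rev (fc (i,j,fH)))).
  { rewrite (map_ext g (sym a b p q)) by auto.
    destruct a, b; try congruence; [exists p, q | exists p, (q+1)]; rot_solve. }
  destruct HR as [i [j HR]]. apply (cyc_eq_map (proj G)) in HR. rewrite Hm, map_rev in HR.
  destruct (classic (O (map (proj G) (fc (0,0,fH))))) as [H|H].
  - apply (O4 _ (proj2 (D i j) H)). exact (O2 _ _ H HR).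
  - destruct (O3 _ (qface G (i,j,fH))) as [H1|H1].
    + apply H, (proj1 (D i j)), H1.
    + apply H. exact (O2 _ _ H1 (cyc_eq_sym _ _ HR)).
Qed.

Lemma Gtrans G g : aut_subgroup G -> acts_freely G -> torus_map (quotient G) -> G g ->
  exists p q, forall v, g v = Tr p q v.
Proof.
  intros HG HF HT Hg. destruct (Gsym G g HG Hg) as [a [b [p [q Hs]]]].
  destruct a, b.
  - exfalso; eapply no_rot; eauto.
  - exfalso; eapply (no_rev G g true false); eauto; discriminate.
  - exfalso; eapply (no_rev G g false true); eauto; discriminate.
  - exists p, q. intros v; rewrite Hs; reflexivity.
Qed.

Lemma proj_tr G x y : aut_subgroup G -> acts_freely G -> torus_map (quotient G) ->
  proj G x = proj G y -> exists h p q, G h /\ (forall v, h v = Tr p q v) /\ h x = y.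
Proof.
  intros HG HF HT E. destruct (proj_inv G _ _ HG E) as [h [Hh Ehx]].
  destruct (Gtrans G h HG HF HT Hh) as [p [q Hp]]. exists h, p, q; auto.
Qed.

Lemma Tr_eq p q i j k i' j' k' : Tr p q (i,j,k) = (i',j',k') -> i + p = i' /\ j + q = j' /\ k = k'.
Proof. simpl. intros H. injection H. intros. subst. auto. Qed.

Lemma map_proj_tr G h p q l : aut_subgroup G -> G h -> (forall v, h v = Tr p q v) ->
  map (proj G) (map (Tr p q) l) = map (proj G) l.
Proof.
  intros HG Hh Hp. rewrite map_map. apply map_ext. intros v. rewrite <- Hp. apply projG; auto.
Qed.

Ltac kill G HG HF HT E :=
  let h := fresh "h" in let p := fresh "p" in let q := fresh "q" in
  let Hh := fresh "Hh" in let Hp := fresh "Hp" in let Ex := fresh "Ex" in let Ex2 := fresh "Ex" in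
  destruct (proj_tr G _ _ HG HF HT E) as [h [p [q [Hh [Hp Ex]]]]];
  pose proof Ex as Ex2; rewrite Hp in Ex2; apply Tr_eq in Ex2 as [? [? ?]]; try discriminate;
  exfalso; apply (noshift G h 0 0 HG HF (proj1 HT) Hh); rewrite Hp; csimpl; tup; lia.

Lemma QX_A G : aut_subgroup G -> acts_freely G -> torus_map (quotient G) ->
  Qp (quotient G) (proj G (0,0,kA)).
Proof.
  intros HG HF HT.
  exists (map (proj G) (fc (0,-1,fT1))), (map (proj G) (fc (0,-1,fT2))),
    (proj G (0,-1,kB)), (proj G (1,-1,kC)).
  repeat split; try apply qface; try reflexivity.
  - apply edge_of_map. left; consec_solve.
  - apply edge_of_map. right; consec_solve.
  - apply in_map. pick_in.
  - intros Hin. apply in_map_iff in Hin as [w [Ew Hw]]. csimpl. dall; subst w.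
    + destruct (proj_tr G _ _ HG HF HT Ew) as [h [p [q [Hh [Hp Ex]]]]].
      rewrite Hp in Ex; csimpl; discriminate.
    + destruct (proj_tr G _ _ HG HF HT Ew) as [h [p [q [Hh [Hp Ex]]]]].
      rewrite Hp in Ex; csimpl; discriminate.
    + destruct (proj_tr G _ _ HG HF HT Ew) as [h [p [q [Hh [Hp Ex]]]]].
      pose proof Ex as Ex2. rewrite Hp in Ex2; apply Tr_eq in Ex2 as [? [? ?]].
      apply (noshift G h 0 (-1) HG HF (proj1 HT) Hh). rewrite Hp; csimpl; tup; lia.
Qed.

Lemma noQX_C G : aut_subgroup G -> acts_freely G -> torus_map (quotient G) ->
  ~ Qp (quotient G) (proj G (0,0,kC)).
Proof.
  intros HG HF HT. pose proof (proj1 HT) as [Hnd _].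
  apply (noQ (quotient G) _ (map (proj G) (fc (-1,0,fT1))) (map (proj G) (fc (0,0,fT2)))).
  - intros s Hs; apply (Hnd s Hs).
  - intros s [t [Ht ->]] Hl Hin. apply in_map_iff in Hin as [w [Ew Hw]].
    destruct (proj_tr G _ _ HG HF HT (eq_sym Ew)) as [h [p [q [Hh [Hp Ex]]]]].
    rewrite Hp in Ex. cbn [Tr] in Ex. subst w.
    destruct (face_K_In t _ Ht Hw) as [F [HF' Hc]].
    rewrite length_map in Hl. assert (HL : length (fc F) = 3%nat) by (rewrite <- Hl; symmetry; apply (len_cycr t (fc F) Hc)).
    cbn [faces_at In] in HF'. dall; subst F; try (cbn in HL; discriminate).
    + left. eapply cyc_eqr_trans; [apply (cyc_eqr_map (proj G) _ _ Hc)|].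
      rewrite <- (map_proj_tr G h p q (fc (-1,0,fT1)) HG Hh Hp).
      left. apply (cyc_eq_rot_eq _ _ 0). csimpl. tup; try reflexivity; lia.
    + right. eapply cyc_eqr_trans; [apply (cyc_eqr_map (proj G) _ _ Hc)|].
      rewrite <- (map_proj_tr G h p q (fc (0,0,fT2)) HG Hh Hp).
      left. apply (cyc_eq_rot_eq _ _ 0). csimpl. tup; try reflexivity; lia.
  - intros y H1 H2. csimpl. dall; subst y; try reflexivity;
    match goal with E : proj G _ = proj G _ |- _ =>
      first [kill G HG HF HT E | kill G HG HF HT (eq_sym E)] end.
Qed.

Lemma rep_spec G (P : QV G) : exists v, P = proj G v.
Proof. destruct P as [P [v Hv]]. exists v. apply qv_eq. simpl. auto. Qed.

Definition rep G (P : QV G) : KV := proj1_sig (constructive_indefinite_description _ (rep_spec G P)).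

Lemma rep_eq G P : P = proj G (rep G P).
Proof. unfold rep. destruct (constructive_indefinite_description _ _) as [v Hv]. simpl. auto. Qed.

Lemma wd G s s' : aut_subgroup G -> (forall x, s' (s x) = x) ->
  (forall g, G g -> exists h, G h /\ forall x, s (g (s' x)) = h x) ->
  forall x y, proj G x = proj G y -> proj G (s x) = proj G (s y).
Proof.
  intros HG Hss Hc x y E. destruct (proj_inv G _ _ HG E) as [g [Hg <-]].
  destruct (Hc g Hg) as [h [Hh Eh]].
  replace (s (g x)) with (h (s x)) by (rewrite <- Eh, Hss; reflexivity).
  symmetry; apply projG; auto.
Qed.

Lemma induced G s s' : aut_subgroup G -> (forall x, s (s' x) = x) -> (forall x, s' (s x) = x) ->
  is_aut K s -> is_aut K s' ->
  (forall g, G g -> exists h, G h /\ forall x, s (g (s' x)) = h x) ->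
  (forall g, G g -> exists h, G h /\ forall x, s' (g (s x)) = h x) ->
  exists f, is_aut (quotient G) f /\ forall v, f (proj G v) = proj G (s v).
Proof.
  intros HG H1 H2 Hs Hs' C1 C2.
  set (f := fun P => proj G (s (rep G P))). set (f' := fun P => proj G (s' (rep G P))).
  assert (Ef : forall v, f (proj G v) = proj G (s v)).
  { intros v. unfold f. apply (wd G s s' HG H2 C1). symmetry; apply rep_eq. }
  assert (Ef' : forall v, f' (proj G v) = proj G (s' v)).
  { intros v. unfold f'. apply (wd G s' s HG H1 C2). symmetry; apply rep_eq. }
  assert (K1 : forall P, f (f' P) = P).
  { intros P. rewrite (rep_eq G P), Ef', Ef, H1. auto. }
  assert (K2 : forall P, f' (f P) = P).
  { intros P. rewrite (rep_eq G P), Ef, Ef', H2. auto. }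
  exists f. split; auto. split; [exists f'; auto|].
  intros l. split.
  - intros [t [Ht E]]. exists (map s' t). split; [apply (proj2 Hs'); exact Ht|].
    transitivity (map f' (map f l)).
    + rewrite map_map, (map_ext _ (fun x => x)), map_id by auto. reflexivity.
    + transitivity (map f' (map (proj G) t)); [f_equal; exact E|].
      rewrite !map_map. apply map_ext. intros; apply Ef'.
  - intros [t [Ht ->]]. exists (map s t). split; [apply (proj2 Hs); auto|].
    rewrite !map_map. apply map_ext. intros; apply Ef.
Qed.

Lemma conjTr G a b c d : aut_subgroup G -> acts_freely G -> torus_map (quotient G) ->
  a + c = 0 -> b + d = 0 ->
  forall g, G g -> exists h, G h /\ forall x, Tr a b (g (Tr c d x)) = h x.
Proof.
  intros HG HF HT Ha Hb g Hg. destruct (Gtrans G g HG HF HT Hg) as [p [q Hp]].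
  exists g. split; auto. intros [[i j] k]. rewrite !Hp. csimpl. tup; lia.
Qed.

Lemma conjRot G a b : aut_subgroup G -> acts_freely G -> torus_map (quotient G) ->
  forall g, G g -> exists h, G h /\
    (forall x, sym true true a b (g (sym true true 0 0 (Tr (-a) (-b) x))) = h x) /\
    (forall x, sym true true 0 0 (Tr (-a) (-b) (g (sym true true a b x))) = h x).
Proof.
  intros HG HF HT g Hg. pose proof HG as [_ [_ [_ Hinv]]].
  destruct (Hinv g Hg) as [gi [Hgi Egi]].
  destruct (Gtrans G g HG HF HT Hg) as [p [q Hp]].
  destruct (Gtrans G gi HG HF HT Hgi) as [p' [q' Hp']].
  pose proof (proj1 (Egi (0,0,kC))) as E. rewrite Hp, Hp' in E.
  cbn [Tr] in E. apply Tr_eq in E as [E1 [E2 _]].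
  exists gi. split; auto. split; intros [[i j] k]; rewrite Hp, Hp'; destruct k; csimpl; tup; lia.
Qed.

Theorem theorem1 :
  forall G : (KV -> KV) -> Prop,
    aut_subgroup G -> acts_freely G -> torus_map (quotient G) ->
    two_vertex_orbits (quotient G).
Proof.
  intros G HG HF HT. exists (proj G (0,0,kA)), (proj G (0,0,kC)). split.
  - intros [f [Hf Ef]]. apply (noQX_C G HG HF HT). rewrite <- Ef. apply Qp_aut; auto.
    apply QX_A; auto.
  - intros w. rewrite (rep_eq G w). destruct (rep G w) as [[i j] k]. destruct k.
    + left. destruct (induced G (Tr i j) (Tr (-i) (-j)) HG) as [f [Hf Ef]];
        try apply Tr_aut; try (intros [[x y] k]; csimpl; tup; lia);
        try (apply conjTr; auto; lia).
      exists f; split; [exact Hf|]; rewrite Ef; f_equal; csimpl; tup; try reflexivity; lia.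
    + left. destruct (induced G (sym true true (i+1) (j-1))
                         (fun v => sym true true 0 0 (Tr (-(i+1)) (-(j-1)) v)) HG) as [f [Hf Ef]].
      * intros [[x y] []]; csimpl; tup; lia.
      * intros [[x y] []]; csimpl; tup; lia.
      * apply sym_aut.
      * apply (comp_aut K (sym true true 0 0) (Tr _ _)); [apply sym_aut|apply Tr_aut].
      * intros g Hg. destruct (conjRot G (i+1) (j-1) HG HF HT g Hg) as [h [Hh [E1 E2]]]. eauto.
      * intros g Hg. destruct (conjRot G (i+1) (j-1) HG HF HT g Hg) as [h [Hh [E1 E2]]]. eauto.
      * exists f; split; [exact Hf|]; rewrite Ef; f_equal; csimpl; tup; try reflexivity; lia.
    + right. destruct (induced G (Tr i j) (Tr (-i) (-j)) HG) as [f [Hf Ef]];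
        try apply Tr_aut; try (intros [[x y] k]; csimpl; tup; lia);
        try (apply conjTr; auto; lia).
      exists f; split; [exact Hf|]; rewrite Ef; f_equal; csimpl; tup; try reflexivity; lia.
Qed.
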